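(* Let $n\ge0$, let $\lambda$ be an integer partition with $|\lambda|=k$, and let $f_\lambda$ be the number of standard Young tableaux of shape $\lambda$. Then $$T^{(n)}_{\varnothing,\lambda}=(n+1)!\binom{n}{k}f_\lambda \qquad\text{and}\qquad T^{(n)}_{\lambda,\varnothing}=\frac{(n+1)!}{(k+1)!}\binom{n}{k}f_\lambda.$$
   Context: Young's lattice $\mathcal{Y}$ is the set of integer partitions (Young diagrams) ordered by inclusion of diagrams; $\mu\lessdot\nu$ means $\nu$ is obtained from $\mu$ by adding one cell, and $\nu\gtrdot\mu$ is the same relation reversed; $\varnothing$ is the empty partition. For partitions $\mu,\nu$, $T^{(n)}_{\mu,\nu}$ is the number of sequences $(\lambda^{(0)},\dots,\lambda^{(3n)})\in\mathcal{Y}^{3n+1}$ with $\lambda^{(0)}=\mu$, $\lambda^{(3n)}=\nu$, and such that for $0\le i<3n$: if $i\equiv0$ or $1\pmod 3$ then either $\lambda^{(i)}\lessdot\lambda^{(i+1)}$ or $\lambda^{(i)}=\lambda^{(i+1)}$; if $i\equiv2\pmod3$ then $\lambda^{(i)}\gtrdot\lambda^{(i+1)}$. *)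

(* Defs.v *)
From mathcomp Require Import all_boot.
Set Implicit Arguments. Unset Strict Implicit. Unset Printing Implicit Defensive.

Definition is_part (l : seq nat) : bool :=
  sorted geq l && all (fun x => 0 < x) l.

Definition psize (l : seq nat) : nat := sumn l.

Definition lessdot (mu nu : seq nat) : Prop :=
  is_part mu /\ is_part nu /\ exists j, nu = incr_nth mu j.

(* Valid sequences (lambda^(0), ..., lambda^(3n)) counted by T^(n)_{mu,nu}. *)
Definition T_walk (n : nat) (mu nu : seq nat) (w : seq (seq nat)) : Prop :=
  size w = 3 * n + 1 /\
  (forall l, l \in w -> is_part l) /\
  nth [::] w 0 = mu /\ nth [::] w (3 * n) = nu /\
  (forall i, i < 3 * n ->
     let a := nth [::] w i in let b := nth [::] w i.+1 in
     if i %% 3 < 2 then (lessdot a b \/ a = b) else lessdot b a).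

Definition is_syt (lam : seq nat) (t : seq (seq nat)) : Prop :=
  map size t = lam /\
  perm_eq (flatten t) (iota 1 (psize lam)) /\
  (forall r, r \in t -> sorted ltn r) /\
  (forall i j, j < size (nth [::] t i.+1) ->
     nth 0 (nth [::] t i) j < nth 0 (nth [::] t i.+1) j).

Definition has_card (T : eqType) (P : T -> Prop) (m : nat) : Prop :=
  exists s : seq T, uniq s /\ (forall x, x \in s <-> P x) /\ size s = m.

(* Main.v *)
Require Import Defs.
From mathcomp Require Import all_boot.
From mathcomp Require Import zify.

Set Implicit Arguments. Unset Strict Implicit. Unset Printing Implicit Defensive.

Lemma partP l : is_part l <->
  (forall k, nth 0 l k.+1 <= nth 0 l k) /\ (forall k, (k < size l) = (0 < nth 0 l k)).
Proof.
rewrite /is_part; split.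
- case/andP => /(sortedP 0) Hs /(all_nthP 0) Ha; split.
  + move=> k; case: (ltnP k.+1 (size l)) => H; first exact: (Hs k H).
    by rewrite (nth_default 0 H).
  + move=> k; case: (ltnP k (size l)) => H; first by rewrite (Ha k H).
    by rewrite (nth_default 0 H) ltnn.
- case=> Hm Hz; apply/andP; split.
  + by apply/(sortedP 0) => i _; exact: Hm.
  + by apply/(all_nthP 0) => i Hi; rewrite -Hz.
Qed.

Lemma part_mono l : is_part l -> forall k, nth 0 l k.+1 <= nth 0 l k.
Proof. by case/partP. Qed.
Lemma part_size l : is_part l -> forall k, (k < size l) = (0 < nth 0 l k).
Proof. by case/partP. Qed.

Lemma mono_le (s : seq nat) : (forall k, nth 0 s k.+1 <= nth 0 s k) ->
  forall m d, nth 0 s (m + d) <= nth 0 s m.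
Proof.
move=> H m d; elim: d => [|d IH]; first by rewrite addn0.
by rewrite addnS; apply: leq_trans (H _) IH.
Qed.

Lemma size_eq_of l n : is_part l -> (forall k, (k < n) = (0 < nth 0 l k)) -> size l = n.
Proof.
move=> Hl H; have H2 := part_size Hl.
apply/eqP; rewrite eqn_leq; apply/andP; split.
- by rewrite leqNgt H2 -H ltnn.
- by rewrite leqNgt H -H2 ltnn.
Qed.

Lemma part_ext a b : is_part a -> is_part b ->
  (forall k, nth 0 a k = nth 0 b k) -> a = b.
Proof.
move=> Ha Hb H; have Hs : size a = size b.
  by apply: size_eq_of => // k; rewrite H (part_size Hb).
by apply: (eq_from_nth (x0 := 0)) => // i _; apply: H.
Qed.

Definition trim (s : seq nat) := take (find (pred1 0) s) s.

Lemma trim_nth s : (forall k, nth 0 s k.+1 <= nth 0 s k) ->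
  forall k, nth 0 (trim s) k = nth 0 s k.
Proof.
move=> Hm k; rewrite /trim.
case: (ltnP k (find (pred1 0) s)) => Hk; first by rewrite nth_take.
rewrite nth_default; last first.
  by rewrite size_take; case: ifP => // /negbT; rewrite -leqNgt => H; exact: leq_trans H Hk.
case Hh: (has (pred1 0) s).
- have := nth_find 0 Hh => /= /eqP H0.
  have := mono_le Hm (find (pred1 0) s) (k - find (pred1 0) s).
  by rewrite subnKC // H0 leqn0 => /eqP ->.
- have Hf : find (pred1 0) s = size s.
    by apply/eqP; rewrite eqn_leq find_size leqNgt -has_find Hh.
  by rewrite nth_default // -Hf.
Qed.

Lemma trim_part s : (forall k, nth 0 s k.+1 <= nth 0 s k) -> is_part (trim s).
Proof.
move=> Hm; apply/partP; split=> [k|k]; rewrite !trim_nth //.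
have Hsz : size (trim s) = find (pred1 0) s.
  by rewrite /trim size_takel // find_size.
rewrite Hsz; case: (ltnP k (find (pred1 0) s)) => Hk.
- by have := before_find 0 Hk => /= /eqP H; symmetry; rewrite lt0n; apply/eqP.
- rewrite -(trim_nth Hm) nth_default //; by rewrite Hsz.
Qed.

Definition addable (l : seq nat) i := (i == 0) || (nth 0 l i < nth 0 l i.-1).
Definition removable (l : seq nat) j := nth 0 l j.+1 < nth 0 l j.
Definition decr (l : seq nat) j := trim (set_nth 0 l j (nth 0 l j).-1).

Lemma nth_set0 (l : seq nat) j v k : nth 0 (set_nth 0 l j v) k = if k == j then v else nth 0 l k.
Proof. by rewrite nth_set_nth. Qed.

Lemma decr_mono l j : is_part l -> removable l j ->
  forall k, nth 0 (set_nth 0 l j (nth 0 l j).-1) k.+1 <= nth 0 (set_nth 0 l j (nth 0 l j).-1) k.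
Proof.
move=> Hl Hr k; rewrite !nth_set0; have := part_mono Hl k.
move: Hr; rewrite /removable.
case: ifP => /eqP H1; case: ifP => /eqP H2; subst; try lia.
Qed.

Lemma decr_part l j : is_part l -> removable l j -> is_part (decr l j).
Proof. by move=> Hl Hr; apply: trim_part; apply: decr_mono. Qed.

Lemma nth_decr l j k : is_part l -> removable l j -> nth 0 (decr l j) k = nth 0 l k - (j == k).
Proof.
move=> Hl Hr; rewrite /decr trim_nth; last exact: decr_mono.
rewrite nth_set0; case: ifP => /eqP H; subst; rewrite ?eqxx; lia.
Qed.

Lemma removable_size l j : is_part l -> removable l j -> j < size l.
Proof. by move=> Hl Hr; rewrite part_size //; move: Hr; rewrite /removable; lia. Qed.

Lemma addable_size l i : is_part l -> addable l i -> i <= size l.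
Proof.
move=> Hl; rewrite /addable; case: i => [|i] //= H.
rewrite leqNgt; apply/negP => H2.
move: H; rewrite !nth_default //; apply: ltnW => //.
Qed.

Lemma incr_part l i : is_part l -> is_part (incr_nth l i) = addable l i.
Proof.
move=> Hl; apply/idP/idP => H.
- rewrite /addable; case: i H => [|i] //= H.
  have := part_mono H i; rewrite !nth_incr_nth eqxx.
  by rewrite (_ : (i.+1 == i) = false) //; lia.
- have Hs := addable_size Hl H.
  apply/partP; split.
  + move=> k; rewrite !nth_incr_nth; have := part_mono Hl k.
    move: H; rewrite /addable.
    case: (eqVneq i k.+1) => [->|H1] /=; first lia.
    case: (eqVneq i k) => [->|H2] /=; lia.
  + move=> k; rewrite size_incr_nth nth_incr_nth.
    have := part_size Hl k.
    case: (ltnP i (size l)) => H1.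
    * case: (eqVneq i k) => [<-|H2] /=; last by rewrite add0n.
      by move=> _; rewrite H1.
    * have Ei : i = size l by apply/eqP; rewrite eqn_leq Hs.
      case: (eqVneq i k) => [<-|H2] /=; first by rewrite ltnSn.
      rewrite add0n => <-; subst; lia.
Qed.

Lemma sumn_incr l i : sumn (incr_nth l i) = (sumn l).+1.
Proof.
elim: l i => [|x l IH] [|i] //=.
- by elim: i => //= i ->.
- by rewrite IH addnS.
Qed.

Lemma incr_decr l j : is_part l -> removable l j -> incr_nth (decr l j) j = l.
Proof.
move=> Hl Hr.
have Hd := decr_part Hl Hr.
have Ha : addable (decr l j) j.
  rewrite /addable; case: j Hr Hd => [|j] //= Hr Hd.
  rewrite !nth_decr // eqxx (_ : (j.+1 == j) = false); last lia.
  have := part_mono Hl j; move: Hr; rewrite /removable; lia.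
apply: part_ext => //; first by rewrite incr_part.
move=> k; rewrite nth_incr_nth nth_decr //.
have := removable_size Hl Hr; rewrite part_size // => H.
case: (eqVneq j k) => [<-|] /=; lia.
Qed.

Lemma decr_incr l i : is_part l -> addable l i ->
  removable (incr_nth l i) i /\ decr (incr_nth l i) i = l.
Proof.
move=> Hl Ha.
have Hr : removable (incr_nth l i) i.
  rewrite /removable !nth_incr_nth eqxx (_ : (i == i.+1) = false); last lia.
  have := part_mono Hl i; lia.
split=> //; apply: part_ext => //; first by apply: decr_part => //; rewrite incr_part.
by move=> k; rewrite nth_decr ?incr_part // nth_incr_nth; lia.
Qed.

Lemma psize_decr l j : is_part l -> removable l j -> psize l = (psize (decr l j)).+1.
Proof. by move=> Hl Hr; rewrite -{1}(incr_decr Hl Hr) /psize sumn_incr. Qed.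

Lemma psize_incr l i : psize (incr_nth l i) = (psize l).+1.
Proof. exact: sumn_incr. Qed.

Lemma part_nil_psize l : is_part l -> (l == [::]) = (psize l == 0).
Proof.
case: l => [|x l] //= /partP [_ H]; have := H 0 => /= H0.
by symmetry; apply/negbTE; rewrite -lt0n; apply: leq_trans (leq_addr _ _); rewrite -H0.
Qed.

Definition ups (l : seq nat) :=
  [seq incr_nth l i | i <- [seq i <- iota 0 (size l).+1 | addable l i]].
Definition downs (l : seq nat) :=
  [seq decr l j | j <- [seq j <- iota 0 (size l) | removable l j]].


Lemma mem_upsP mu nu : is_part mu ->
  reflect (exists2 i, addable mu i & nu = incr_nth mu i) (nu \in ups mu).
Proof.
move=> Hm; apply: (iffP mapP).
- by case=> i; rewrite mem_filter => /andP [Ha _] ->; exists i.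
- case=> i Ha ->; exists i => //; rewrite mem_filter Ha mem_iota /= add0n ltnS.
  exact: addable_size.
Qed.

Lemma mem_downsP mu nu : is_part nu ->
  reflect (exists2 j, removable nu j & mu = decr nu j) (mu \in downs nu).
Proof.
move=> Hn; apply: (iffP mapP).
- by case=> j; rewrite mem_filter => /andP [Ha _] ->; exists j.
- case=> j Ha ->; exists j => //; rewrite mem_filter Ha mem_iota /= add0n.
  exact: removable_size.
Qed.

Lemma lessdot_ups mu nu : is_part mu -> (lessdot mu nu <-> nu \in ups mu).
Proof.
move=> Hm; split.
- case=> _ [Hn [j E]]; apply/mem_upsP => //; exists j => //.
  by rewrite -incr_part // -E.
- case/mem_upsP => // i Ha E; split => //; split; last by exists i.
  by rewrite E incr_part.
Qed.

Lemma lessdot_downs mu nu : is_part nu -> (lessdot mu nu <-> mu \in downs nu).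
Proof.
move=> Hn; split.
- case=> Hm [_ [j E]]; apply/mem_downsP => //; exists j.
  + have Ha : addable mu j by rewrite -incr_part // -E.
    by rewrite E; case: (decr_incr Hm Ha).
  + by rewrite E; case: (decr_incr Hm (_ : addable mu j)) => //; rewrite -incr_part // -E.
- case/mem_downsP => // j Hr E; split; first by rewrite E; apply: decr_part.
  by split => //; exists j; rewrite E incr_decr.
Qed.

Lemma ups_part mu nu : is_part mu -> nu \in ups mu -> is_part nu /\ psize nu = (psize mu).+1.
Proof.
by move=> Hm /mem_upsP [] // i Ha ->; rewrite incr_part // psize_incr.
Qed.

Lemma downs_part mu nu : is_part nu -> mu \in downs nu -> is_part mu /\ psize nu = (psize mu).+1.
Proof.
by move=> Hn /mem_downsP [] // j Hr ->; split; [apply: decr_part | apply: psize_decr].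
Qed.

Lemma ups_uniq mu : is_part mu -> uniq (ups mu).
Proof.
move=> Hm; rewrite map_inj_in_uniq ?filter_uniq ?iota_uniq //.
move=> i j _ _ E; have := congr1 (fun s => nth 0 s i) E; rewrite !nth_incr_nth eqxx.
by case: (eqVneq j i) => //=; lia.
Qed.

Lemma downs_uniq nu : is_part nu -> uniq (downs nu).
Proof.
move=> Hn; rewrite map_inj_in_uniq ?filter_uniq ?iota_uniq //.
move=> i j; rewrite !mem_filter => /andP [Hi _] /andP [Hj _] E.
have := congr1 (fun s => nth 0 s i) E; rewrite !nth_decr // eqxx.
have : 0 < nth 0 nu i by move: Hi; rewrite /removable; lia.
by case: (eqVneq j i) => //=; lia.
Qed.

Lemma ups_notin mu : is_part mu -> mu \notin ups mu.
Proof. by move=> Hm; apply/negP => /(ups_part Hm) [_]; lia. Qed.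

Lemma downs_notin nu : is_part nu -> nu \notin downs nu.
Proof. by move=> Hm; apply/negP => /(downs_part Hm) [_]; lia. Qed.

Section HC.
Variable T : eqType.

Lemma hc_ext (P Q : T -> Prop) m : (forall x, P x <-> Q x) -> has_card P m -> has_card Q m.
Proof. move=> H [s [Hu [Hm Hs]]]; exists s; split=> //; split=> // x; rewrite Hm. exact: H. Qed.

Lemma hc_eq (P : T -> Prop) m m' : m = m' -> has_card P m -> has_card P m'.
Proof. by move=> ->. Qed.

Lemma hc_image (U : eqType) (P : U -> Prop) (g : U -> T) m :
  has_card P m -> (forall x y, P x -> P y -> g x = g y -> x = y) ->
  has_card (fun z => exists x, P x /\ z = g x) m.
Proof.
move=> [s [Hu [Hm Hs]]] Hi; exists (map g s); split; last split.
- by rewrite map_inj_in_uniq // => x y /Hm Hx /Hm Hy; apply: Hi.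
- move=> z; split.
  + by case/mapP => x /Hm Hx ->; exists x.
  + by case=> x [/Hm Hx ->]; apply: map_f.
- by rewrite size_map.
Qed.

Lemma hc_union (I : eqType) (idx : seq I) (P : I -> T -> Prop) (m : I -> nat) (Q : T -> Prop) :
  uniq idx -> (forall i, i \in idx -> has_card (P i) (m i)) ->
  (forall i1 i2 x, i1 \in idx -> i2 \in idx -> P i1 x -> P i2 x -> i1 = i2) ->
  (forall x, Q x <-> exists i, i \in idx /\ P i x) ->
  has_card Q (\sum_(i <- idx) m i).
Proof.
elim: idx Q => [|i idx IH] Q Hu Hc Hd HQ.
- exists [::]; split=> //; split; last by rewrite big_nil.
  move=> x; split=> //.
  by move/HQ => [i []].
- move: Hu => /= /andP [Hni Hu].
  have [s1 [Hu1 [Hm1 Hs1]]] := Hc i (mem_head _ _).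
  have [s2 [Hu2 [Hm2 Hs2]]] : has_card (fun x => exists j, j \in idx /\ P j x)
      (\sum_(j <- idx) m j).
    apply: IH => //.
    + by move=> j Hj; apply: Hc; rewrite inE Hj orbT.
    + by move=> j1 j2 x H1 H2; apply: Hd; rewrite inE ?H1 ?H2 orbT.
  exists (s1 ++ s2); split; last split.
  + rewrite cat_uniq Hu1 Hu2 /= andbT; apply/hasPn => x /Hm2 [j [Hj Hx]].
    apply/negP => /Hm1 Hx'.
    have Hj' : j \in i :: idx by rewrite inE Hj orbT.
    have E := Hd i j x (mem_head _ _) Hj' Hx' Hx.
    by move: Hni; rewrite E Hj.
  + move=> x; rewrite mem_cat HQ; split.
    * case/orP => [/Hm1 Hx|/Hm2 [j [Hj Hx]]]; first by exists i; rewrite mem_head.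
      by exists j; rewrite inE Hj orbT.
    * case=> j []; rewrite inE => /orP [/eqP -> Hx|Hj Hx].
      - by apply/orP; left; apply/Hm1.
      - by apply/orP; right; apply/Hm2; exists j.
  + by rewrite size_cat Hs1 Hs2 big_cons.
Qed.

Lemma hc_uniq (P : T -> Prop) m m' : has_card P m -> has_card P m' -> m = m'.
Proof.
move=> [s [Hu [Hm <-]]] [s' [Hu' [Hm' <-]]]; apply: perm_size; apply: uniq_perm => // x.
apply/idP/idP => H.
- by apply/Hm'; apply/Hm.
- by apply/Hm; apply/Hm'.
Qed.

End HC.

Definition stT (p : nat) (a b : seq nat) : Prop :=
  if p < 2 then (lessdot a b \/ a = b) else lessdot b a.

Definition Wk ph m a b (w : seq (seq nat)) : Prop :=
  size w = m.+1 /\ (forall l, l \in w -> is_part l) /\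
  nth [::] w 0 = a /\ nth [::] w m = b /\
  (forall i, i < m -> stT ((ph + i) %% 3) (nth [::] w i) (nth [::] w i.+1)).

Lemma T_Wk n mu nu w : T_walk n mu nu w <-> Wk 0 (3 * n) mu nu w.
Proof.
rewrite /T_walk /Wk addn1; split; case=> H1 [H2 [H3 [H4 H5]]]; do 4 (split=> //).
Qed.

Lemma Wk_ph3 ph m a b w : Wk (ph + 3) m a b w <-> Wk ph m a b w.
Proof.
rewrite /Wk; have E : forall i, (ph + 3 + i) %% 3 = (ph + i) %% 3.
  by move=> i; rewrite addnAC -modnDmr modnn addn0.
split; case=> [H1 [H2 [H3 [H4 H5]]]]; (split; [done|split; [done|split;[done|split;[done|]]]]) => i Hi.
- by rewrite -E; apply: H5.
- by rewrite E; apply: H5.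
Qed.

Definition succL p a := if p < 2 then a :: ups a else downs a.
Definition predL p b := if p < 2 then b :: downs b else ups b.

Lemma st_succ p a c : is_part a -> (stT p a c <-> c \in succL p a).
Proof.
move=> Ha; rewrite /stT /succL; case: ifP => _.
- rewrite inE (lessdot_ups _ Ha); split.
  + by case=> [->|->]; rewrite ?eqxx ?orbT.
  + by case/orP => [/eqP ->|H]; [right|left].
- exact: lessdot_downs.
Qed.

Lemma st_pred p c b : is_part b -> (stT p c b <-> c \in predL p b).
Proof.
move=> Hb; rewrite /stT /predL; case: ifP => _.
- rewrite inE; split.
  + by case=> [/(lessdot_downs _ Hb) ->|->]; rewrite ?eqxx ?orbT.
  + by case/orP => [/eqP ->|/(lessdot_downs _ Hb) H]; [right|left].
- exact: lessdot_ups.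
Qed.

Lemma succ_uniq p a : is_part a -> uniq (succL p a).
Proof.
move=> Ha; rewrite /succL; case: ifP => _ /=; last exact: downs_uniq.
by apply/andP; split; [exact: ups_notin | exact: ups_uniq].
Qed.

Lemma pred_uniq p a : is_part a -> uniq (predL p a).
Proof.
move=> Ha; rewrite /predL; case: ifP => _ /=; last exact: ups_uniq.
by apply/andP; split; [exact: downs_notin | exact: downs_uniq].
Qed.

Lemma succ_part p a c : is_part a -> c \in succL p a -> is_part c.
Proof.
move=> Ha; rewrite /succL; case: ifP => _.
- by rewrite inE => /orP [/eqP ->|/(ups_part Ha) []].
- by move/(downs_part Ha) => [].
Qed.

Lemma pred_part p a c : is_part a -> c \in predL p a -> is_part c.
Proof.
move=> Ha; rewrite /predL; case: ifP => _.
- by rewrite inE => /orP [/eqP ->|/(downs_part Ha) []].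
- by move/(ups_part Ha) => [].
Qed.

Lemma walk0 ph a b : has_card (Wk ph 0 a b) (is_part a && (a == b)).
Proof.
case Ha: (is_part a); case: (eqVneq a b) => [<-|Hab] /=.
- exists [:: [:: a]]; split=> //; split=> // w; rewrite inE; split.
  + move/eqP => ->; split=> //; split; first by move=> l; rewrite inE => /eqP ->.
    by do 2 split=> //.
  + case: w => [|x [|y w]] [//= Hs [Hp [H0 [H1 _]]]]; by rewrite /= -H0.
- exists [::]; split=> //; split=> // w; split=> //.
  by case=> _ [_ [H0 [H1 _]]]; move: Hab; rewrite -H0 -H1 eqxx.
- exists [::]; split=> //; split=> // w; split=> //.
  case=> Hs [Hp [H0 _]]; move: Ha; rewrite -H0 Hp //.
  by rewrite mem_nth // Hs.
- exists [::]; split=> //; split=> // w; split=> //.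
  case=> Hs [Hp [H0 _]]; move: Ha; rewrite -H0 Hp //.
  by rewrite mem_nth // Hs.
Qed.

Lemma walk_front ph m a b (G : seq nat -> nat) : is_part a ->
  (forall c, c \in succL (ph %% 3) a -> has_card (Wk ph.+1 m c b) (G c)) ->
  has_card (Wk ph m.+1 a b) (\sum_(c <- succL (ph %% 3) a) G c).
Proof.
move=> Ha HG.
apply: (@hc_union _ _ _ (fun c w => exists w', Wk ph.+1 m c b w' /\ w = a :: w')).
- exact: succ_uniq.
- move=> c Hc; apply: hc_image; first exact: HG.
  by move=> x y _ _ [].
- move=> c1 c2 w _ _ [w1 [[_ [_ [<- _]]] ->]] [w2 [[_ [_ [<- _]]] []]] ->.
  by [].
- move=> w; split.
  + case=> Hs [Hp [H0 [Hm Hst]]].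
    case: w Hs Hp H0 Hm Hst => [|x w'] //= [Hs] Hp H0 Hm Hst.
    exists (nth [::] w' 0); split.
    * apply/st_succ => //; have := Hst 0 (ltn0Sn _); by rewrite addn0 /= H0.
    * exists w'; split; last by rewrite H0.
      split=> //; split; first by move=> l Hl; apply: Hp; rewrite inE Hl orbT.
      split=> //; split=> // i Hi.
      by have := Hst i.+1 Hi; rewrite addnS -addSn.
  + case=> c [Hc [w' [[Hs [Hp [H0 [Hm Hst]]]] ->]]].
    split; first by rewrite /= Hs.
    split; first by move=> l; rewrite inE => /orP [/eqP ->|/Hp].
    split=> //; split=> //; case=> [|i] Hi /=.
    * by rewrite addn0 H0; apply/st_succ.
    * by rewrite addnS -addSn; apply: Hst.
Qed.


Lemma walk_back ph m a b (G : seq nat -> nat) : is_part b ->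
  (forall c, c \in predL ((ph + m) %% 3) b -> has_card (Wk ph m a c) (G c)) ->
  has_card (Wk ph m.+1 a b) (\sum_(c <- predL ((ph + m) %% 3) b) G c).
Proof.
move=> Hb HG.
apply: (@hc_union _ _ _ (fun c w => exists w', Wk ph m a c w' /\ w = rcons w' b)).
- exact: pred_uniq.
- move=> c Hc; apply: hc_image; first exact: HG.
  by move=> x y _ _ /rcons_inj [].
- move=> c1 c2 w _ _ [w1 [[Hs1 [_ [_ [<- _]]]] ->]] [w2 [[Hs2 [_ [_ [<- _]]]]]].
  by move/rcons_inj => [->].
- move=> w; split.
  + case=> Hs [Hp [H0 [Hm Hst]]].
    case: (lastP w) Hs Hp H0 Hm Hst => [|w' x] //; rewrite size_rcons => [[Hs]] Hp H0 Hm Hst.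
    have Ex : x = b by rewrite -Hm nth_rcons Hs ltnn eqxx.
    have Hn : forall i, i <= m -> nth [::] (rcons w' x) i = nth [::] w' i.
      by move=> i Hi; rewrite nth_rcons Hs ltnS Hi.
    exists (nth [::] w' m); split.
    * apply/st_pred => //; have := Hst m (ltnSn _).
      by rewrite Hn // nth_rcons Hs ltnn eqxx Ex.
    * exists w'; split; last by rewrite Ex.
      split=> //; split; first by move=> l Hl; apply: Hp; rewrite mem_rcons inE Hl orbT.
      split; first by rewrite -Hn.
      split=> // i Hi.
      by have := Hst i (ltnW Hi); rewrite !Hn // ltnW.
  + case=> c [Hc [w' [[Hs [Hp [H0 [Hm Hst]]]] ->]]].
    have Hn : forall i, i <= m -> nth [::] (rcons w' b) i = nth [::] w' i.
      by move=> i Hi; rewrite nth_rcons Hs ltnS Hi.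
    split; first by rewrite size_rcons Hs.
    split; first by move=> l; rewrite mem_rcons inE => /orP [/eqP ->|/Hp].
    split; first by rewrite Hn.
    split; first by rewrite nth_rcons Hs ltnn eqxx.
    move=> i; rewrite ltnS leq_eqVlt => /orP [/eqP ->|Hi].
    * rewrite Hn //. rewrite nth_rcons Hs ltnn eqxx Hm. apply/(st_pred _ _ Hb). exact: Hc.
    * rewrite (Hn i) ?(ltnW Hi) // (Hn i.+1) //. exact: Hst.
Qed.

Fixpoint fN (m : nat) (nu : seq nat) : nat :=
  if m is m'.+1 then \sum_(mu <- downs nu) fN m' mu else (nu == [::]).
Definition fl nu := fN (psize nu) nu.

Lemma fl_nil : fl [::] = 1.
Proof. by []. Qed.

Lemma fl_rec nu : is_part nu -> nu != [::] -> fl nu = \sum_(mu <- downs nu) fl mu.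
Proof.
move=> Hn; rewrite part_nil_psize // /fl; case E: (psize nu) => [|m] //= _.
apply: eq_big_seq => mu Hmu; have [_ Hs] := downs_part Hn Hmu.
by move: Hs; rewrite E => [[->]].
Qed.

Lemma sum_downs_fl nu : is_part nu -> \sum_(mu <- downs nu) fl mu = (0 < psize nu) * fl nu.
Proof.
move=> Hn; case E: (psize nu) => [|m] /=.
- have : nu == [::] by rewrite part_nil_psize // E.
  by move/eqP => ->; rewrite big_nil.
- by rewrite mul1n fl_rec // part_nil_psize // E.
Qed.

Lemma sum_widen (P : pred nat) (F : nat -> nat) n N : n <= N ->
  (forall i, n <= i -> P i = false) ->
  \sum_(i <- iota 0 N | P i) F i = \sum_(i <- iota 0 n | P i) F i.
Proof.
move=> H HP; rewrite -(subnKC H) iotaD big_cat /= [X in _ + X]big1_seq ?addn0 //.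
by move=> i /andP [Hp]; rewrite mem_iota => /andP [Hi _]; rewrite HP in Hp.
Qed.

Lemma sum_ups_idx (F : seq nat -> nat) l N : is_part l -> (size l).+1 <= N ->
  \sum_(nu <- ups l) F nu = \sum_(i <- iota 0 N | addable l i) F (incr_nth l i).
Proof.
move=> Hl HN; rewrite /ups big_map big_filter (sum_widen _ HN) //.
by move=> i Hi; apply/negP => /(addable_size Hl); rewrite leqNgt Hi.
Qed.

Lemma sum_downs_idx (F : seq nat -> nat) l N : is_part l -> size l <= N ->
  \sum_(nu <- downs l) F nu = \sum_(j <- iota 0 N | removable l j) F (decr l j).
Proof.
move=> Hl HN; rewrite /downs big_map big_filter (sum_widen _ HN) //.
by move=> i Hi; apply/negP => /(removable_size Hl); rewrite ltnNge Hi.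
Qed.

Lemma size_decr l j : is_part l -> removable l j -> size (decr l j) <= size l.
Proof.
move=> Hl Hr; rewrite leqNgt; apply/negP => H.
have := part_size (decr_part Hl Hr) (size l); rewrite H nth_decr // nth_default // sub0n.
Qed.

Lemma pair_cond l (i j : nat) : is_part l -> i != j ->
  (addable l i && removable (incr_nth l i) j) = (removable l j && addable (decr l j) i).
Proof.
move=> Hl Hij; case Hr: (removable l j) => /=.
- rewrite /addable nth_decr //; case: i Hij => [|i] Hij /=.
  + case: j Hij Hr => [|j] //= Hij.
    by rewrite /removable !nth_incr_nth /= !add0n => ->.
  + rewrite !nth_decr // /removable !nth_incr_nth; move: Hr; rewrite /removable.
    case: (eqVneq i j) => [E|E] H2; [subst|].
    * rewrite eqxx (gtn_eqF (ltnSn j)) (ltn_eqF (ltnSn j)) /=.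
      apply/andP/idP => [[? ?]|?]; try split; lia.
    * have e1 : (i.+1 == j.+1) = false by apply/negbTE; rewrite eqSS.
      have e2 : (j == i) = false by apply/negbTE; rewrite eq_sym.
      have e3 : (i.+1 == j) = false by apply/negbTE.
      have e4 : (j == i.+1) = false by apply/negbTE; rewrite eq_sym.
      rewrite ?e1 ?e2 ?e3 ?e4 /=.
      apply/andP/idP => [[? ?]|?]; try split; lia.
- apply/negbTE; rewrite negb_and; apply/orP; right.
  move: Hr; rewrite /removable !nth_incr_nth.
  case: (eqVneq i j.+1) => [->|E1]; case: (eqVneq i j) => [E2|E2]; subst; rewrite ?eqxx //=; try lia.
Qed.

Lemma pairc_eq l (i j : nat) : is_part l -> i != j -> removable l j -> addable (decr l j) i ->
  decr (incr_nth l i) j = incr_nth (decr l j) i.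
Proof.
move=> Hl Hij Hr Ha.
have Hd := decr_part Hl Hr.
have Hc : addable l i && removable (incr_nth l i) j by rewrite pair_cond // Hr Ha.
case/andP: Hc => Ha' Hr'.
have Hi : is_part (incr_nth l i) by rewrite incr_part.
apply: part_ext; first exact: decr_part.
- by rewrite incr_part.
- move=> k; rewrite nth_decr // !nth_incr_nth nth_decr //.
  move: Hr; rewrite /removable; case: (eqVneq j k) => [<-|E]; rewrite ?eqxx.
  + by rewrite (negbTE Hij) /= => H; rewrite !add0n; lia.
  + by rewrite !subn0.
Qed.

Lemma incr_nonnil l i : incr_nth l i != [::].
Proof. by case: l; case: i. Qed.

Lemma ups_fl_aux n : forall l, psize l < n -> is_part l ->
  \sum_(nu <- ups l) fl nu = (psize l).+1 * fl l.
Proof.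
elim: n => [|n IH] l Hn Hl //.
set k := psize l; set N := (size l).+2.
have HN1 : (size l).+1 <= N by rewrite /N.
set X := \sum_(i <- iota 0 N) \sum_(j <- iota 0 N)
   (if addable l i && removable (incr_nth l i) j && (j != i)
    then fl (decr (incr_nth l i) j) else 0).
set X' := \sum_(j <- iota 0 N) \sum_(i <- iota 0 N)
   (if removable l j && addable (decr l j) i && (i != j)
    then fl (incr_nth (decr l j) i) else 0).
have HS : \sum_(nu <- ups l) fl nu =
   (\sum_(i <- iota 0 N) (if addable l i then 1 else 0)) * fl l + X.
  rewrite (sum_ups_idx _ Hl HN1) big_mkcond big_distrl -big_split /=.
  apply: eq_bigr => i _; case Ha: (addable l i) => /=; last first.
    by rewrite mul0n add0n big1.
  rewrite mul1n.
  have Hi : is_part (incr_nth l i) by rewrite incr_part.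
  have HsN : size (incr_nth l i) <= N.
    rewrite size_incr_nth; case: ifP => _; first by rewrite /N; lia.
    by have := addable_size Hl Ha; rewrite /N; lia.
  have HiN : i \in iota 0 N by rewrite mem_iota add0n; have := addable_size Hl Ha; rewrite /N; lia.
  rewrite fl_rec ?incr_nonnil // (sum_downs_idx _ Hi HsN) big_mkcond (bigD1_seq i) ?iota_uniq //=.
  have [Hr E] := decr_incr Hl Ha; rewrite Hr E; congr (_ + _).
  rewrite big_mkcond; apply: eq_bigr => j _.
  by case: (j != i); case: (removable _ j); rewrite ?andbT ?andbF.
have HY : (\sum_(j <- iota 0 N) (if removable l j then 1 else 0)) * fl l + X' = k * fl l.
  transitivity (\sum_(j <- iota 0 N)
     (if removable l j then \sum_(nu <- ups (decr l j)) fl nu else 0)).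
    rewrite big_distrl -big_split /=; apply: eq_bigr => j _.
    case Hr: (removable l j) => /=; last by rewrite mul0n add0n big1.
    rewrite mul1n.
    have Hd := decr_part Hl Hr.
    have HsN : (size (decr l j)).+1 <= N by have := size_decr Hl Hr; rewrite /N; lia.
    have HjN : j \in iota 0 N by rewrite mem_iota add0n; have := removable_size Hl Hr; rewrite /N; lia.
    rewrite [RHS](sum_ups_idx _ Hd HsN) [RHS]big_mkcond [RHS](bigD1_seq j) ?iota_uniq //.
    have Ha : addable (decr l j) j by rewrite -incr_part // incr_decr.
    rewrite Ha incr_decr //; congr (_ + _).
    rewrite [RHS]big_mkcond; apply: eq_bigr => i _.
    by case: (i != j); case: (addable _ i); rewrite ?andbT ?andbF.
  transitivity (\sum_(j <- iota 0 N) (if removable l j then k * fl (decr l j) else 0)).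
    apply: eq_bigr => j _; case Hr: (removable l j) => //.
    have Hd := decr_part Hl Hr; have Hp := psize_decr Hl Hr.
    rewrite IH //; first by rewrite /k Hp.
    by move: Hn; rewrite Hp.
  rewrite (eq_bigr (fun j => k * (if removable l j then fl (decr l j) else 0))); last first.
    by move=> j _; case: ifP; rewrite ?muln0.
  rewrite -big_distrr -big_mkcond -(sum_downs_idx fl Hl (_ : size l <= N)) ?sum_downs_fl //; last by rewrite /N; lia.
  by rewrite /k; case: (psize l) => [|m]; rewrite ?mul1n.
have HX : X = X'.
  rewrite /X /X' exchange_big /=; apply: eq_bigr => j _; apply: eq_bigr => i _.
  case: (eqVneq i j) => [->|E]; first by rewrite ?eqxx !andbF.
  have E' : j != i by rewrite eq_sym.
  rewrite ?E ?E' ?andbT pair_cond //; case: ifP => // /andP [Hr Ha].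
  by rewrite (pairc_eq Hl E Hr Ha).
have Hadd : \sum_(i <- iota 0 N) (if addable l i then 1 else 0) =
    (\sum_(j <- iota 0 N) (if removable l j then 1 else 0)).+1.
  rewrite [in LHS](_ : iota 0 N = 0 :: map (addn 1) (iota 0 (size l).+1)); last by rewrite -iotaDl.
  rewrite big_cons (_ : addable l 0 = true) // add1n; congr _.+1.
  rewrite big_map.
  rewrite -big_mkcond -[RHS]big_mkcond.
  have HR : forall i, size l <= i -> removable l i = false.
    by move=> i Hi; apply/negP => /(removable_size Hl); rewrite ltnNge Hi.
  have H1 : size l <= (size l).+1 by [].
  have H2 : size l <= N by rewrite /N; lia.
  by rewrite (sum_widen _ H1 HR) [RHS](sum_widen _ H2 HR).
by rewrite HS Hadd HX mulSn -addnA HY mulSn.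
Qed.

Lemma ups_fl l : is_part l -> \sum_(nu <- ups l) fl nu = (psize l).+1 * fl l.
Proof. exact: (@ups_fl_aux (psize l).+1). Qed.

Definition Cc n k := (n.+1)`! * 'C(n, k).
Definition Dd n k := (n.+1)`! %/ (k.+1)`! * 'C(n, k).

Lemma DC n k : Dd n k * (k.+1)`! = Cc n k.
Proof.
rewrite /Dd /Cc; case: (leqP k n) => Hk.
- have Hd : (k.+1)`! %| (n.+1)`!.
    by rewrite -(bin_fact (_ : k.+1 <= n.+1)) // mulnCA dvdn_mulr.
  by rewrite mulnAC divnK.
- by rewrite bin_small // !muln0 mul0n.
Qed.

Lemma binSk n k : 'C(n.+1, k) = (0 < k) * 'C(n, k.-1) + 'C(n, k).
Proof. by case: k => [|k]; [rewrite !bin0 | rewrite binS mul1n addnC]. Qed.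

Lemma arith1 n k : Cc n.+1 k = k.+1 * (Cc n k.+1 + 2 * Cc n k + (0 < k) * Cc n k.-1).
Proof.
have E := mul_bin_diag n.+2 k; rewrite /= in E.
rewrite /Cc [(n.+2)`!]factS -mulnA mulnCA E binS (binSk n k) binS.
move: ('C(n, k.+1)) ('C(n, k)) ('C(n, k.-1)) ((n.+1)`!) ((0 < k) : nat) => a b c F e.
nia.
Qed.

Lemma arith2 n k : Dd n.+1 k =
  (0 < k) * Dd n k.-1 + Dd n k * k.+1 + (Dd n k + Dd n k.+1 * k.+2) * k.+1.
Proof.
apply/eqP; rewrite -(eqn_pmul2r (fact_gt0 k.+1)) DC arith1; apply/eqP.
have E1 : (0 < k) * Dd n k.-1 * (k.+1)`! = (0 < k) * (k.+1 * Cc n k.-1).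
  by case: k => [|k] //=; rewrite !mul1n factS mulnCA DC.
have E2 : Dd n k.+1 * k.+2 * (k.+1)`! = Cc n k.+1.
  by rewrite -DC [(k.+2)`!]factS mulnA.
have E3 : Dd n k * k.+1 * (k.+1)`! = k.+1 * Cc n k.
  by rewrite mulnAC DC mulnC.
have E4 : (Dd n k + Dd n k.+1 * k.+2) * k.+1 * (k.+1)`! = k.+1 * (Cc n k + Cc n k.+1).
  by rewrite mulnAC mulnDl DC E2 mulnC.
rewrite mulnDl mulnDl E1 E3 E4.
move: (Cc n k.+1) (Cc n k) (Cc n k.-1) ((0 < k) : nat) => a b c e.
nia.
Qed.

Lemma L_down (H : nat -> nat) nu : is_part nu ->
  \sum_(c <- downs nu) H (psize c) * fl c = (0 < psize nu) * (H (psize nu).-1 * fl nu).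
Proof.
move=> Hn; rewrite (eq_big_seq (fun c => H (psize nu).-1 * fl c)); last first.
  by move=> c Hc; have [_ ->] := downs_part Hn Hc.
by rewrite -big_distrr sum_downs_fl //= mulnCA.
Qed.

Lemma L_up (H : nat -> nat) l : is_part l ->
  \sum_(c <- ups l) H (psize c) * fl c = H (psize l).+1 * ((psize l).+1 * fl l).
Proof.
move=> Hl; rewrite (eq_big_seq (fun c => H (psize l).+1 * fl c)); last first.
  by move=> c Hc; have [_ ->] := ups_part Hl Hc.
by rewrite -big_distrr ups_fl.
Qed.

Lemma mod3 n r : (3 * n + r) %% 3 = r %% 3.
Proof. by rewrite mulnC modnMDl. Qed.

Lemma psize0 l : is_part l -> (psize l == 0) = (l == [::]).
Proof. by move=> Hl; rewrite part_nil_psize. Qed.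

Lemma formula1 n : forall lam, is_part lam ->
  has_card (Wk 0 (3 * n) [::] lam) (Cc n (psize lam) * fl lam).
Proof.
elim: n => [|n IH] lam Hl.
- apply: hc_eq (walk0 _ _ _); rewrite /Cc /=.
  case: (eqVneq [::] lam) => [<-|E] //=.
  have : psize lam != 0 by rewrite psize0 // eq_sym.
  by case: (psize lam) => // k _; rewrite bin0n !muln0 mul0n.
- pose H1f m := Cc n m + (0 < m) * Cc n m.-1.
  pose H2f m := H1f m + (0 < m) * H1f m.-1.
  have S1 : forall c2, is_part c2 -> has_card (Wk 0 (3 * n).+1 [::] c2) (H1f (psize c2) * fl c2).
    move=> c2 Hc2.
    have := @walk_back 0 (3 * n) [::] c2 (fun c1 => Cc n (psize c1) * fl c1) Hc2.
    rewrite (_ : (0 + 3 * n) %% 3 = 0); last by rewrite add0n -(addn0 (3 * n)) mod3.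
    move=> W.
    apply: hc_eq (W _); last by move=> c Hc; apply: IH; apply: (pred_part Hc2 Hc).
    by rewrite big_cons L_down // /H1f; nia.
  have S2 : forall c3, is_part c3 -> has_card (Wk 0 (3 * n).+2 [::] c3) (H2f (psize c3) * fl c3).
    move=> c3 Hc3.
    have := @walk_back 0 (3 * n).+1 [::] c3 (fun c2 => H1f (psize c2) * fl c2) Hc3.
    rewrite (_ : (0 + (3 * n).+1) %% 3 = 1); last by rewrite add0n -addn1 mod3.
    move=> W.
    apply: hc_eq (W _); last by move=> c Hc; apply: S1; apply: (pred_part Hc3 Hc).
    by rewrite big_cons L_down // /H2f; nia.
  have := @walk_back 0 (3 * n).+2 [::] lam (fun c3 => H2f (psize c3) * fl c3) Hl.
  rewrite (_ : (0 + (3 * n).+2) %% 3 = 2); last by rewrite add0n -addn2 mod3.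
  move=> W.
  rewrite (_ : 3 * n.+1 = (3 * n).+2.+1); last by rewrite mulnS; lia.
  apply: hc_eq (W _); last by move=> c Hc; apply: S2; apply: (pred_part Hl Hc).
  rewrite L_up // arith1 /H2f /H1f /=.
  move: (Cc n (psize lam).+2) (Cc n (psize lam).+1) (Cc n (psize lam)) (Cc n (psize lam).-1).
  move: (fl lam) ((0 < psize lam) : nat) (psize lam) => f e k a b c d.
  nia.
Qed.

Lemma formula2 n : forall lam, is_part lam ->
  has_card (Wk 0 (3 * n) lam [::]) (Dd n (psize lam) * fl lam).
Proof.
elim: n => [|n IH] lam Hl.
- apply: hc_eq (walk0 _ _ _); rewrite /Dd Hl /=.
  case: (eqVneq lam [::]) => [->|E] //=.
  have : psize lam != 0 by rewrite psize0.
  by case: (psize lam) => // k _; rewrite bin0n !muln0 mul0n.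
- pose K1 m := (0 < m) * Dd n m.-1.
  pose K2 m := K1 m + K1 m.+1 * m.+1.
  have S3 : forall c2, is_part c2 -> has_card (Wk 2 (3 * n).+1 c2 [::]) (K1 (psize c2) * fl c2).
    move=> c2 Hc2.
    have := @walk_front 2 (3 * n) c2 [::] (fun c3 => Dd n (psize c3) * fl c3) Hc2.
    move=> W; apply: hc_eq (W _).
      by rewrite /= L_down // /K1 mulnA.
    move=> c Hc; apply: (hc_ext (P := Wk (0 + 3) (3 * n) c [::])).
      by move=> w; rewrite Wk_ph3.
    by apply: IH; apply: (succ_part Hc2 Hc).
  have S2 : forall c1, is_part c1 -> has_card (Wk 1 (3 * n).+2 c1 [::]) (K2 (psize c1) * fl c1).
    move=> c1 Hc1.
    have := @walk_front 1 (3 * n).+1 c1 [::] (fun c2 => K1 (psize c2) * fl c2) Hc1.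
    move=> W; apply: hc_eq (W _); last by move=> c Hc; apply: S3; apply: (succ_part Hc1 Hc).
    by rewrite /= big_cons L_up // /K2; nia.
  have := @walk_front 0 (3 * n).+2 lam [::] (fun c1 => K2 (psize c1) * fl c1) Hl.
  move=> W.
  rewrite (_ : 3 * n.+1 = (3 * n).+2.+1); last by rewrite mulnS; lia.
  apply: hc_eq (W _); last by move=> c Hc; apply: S2; apply: (succ_part Hl Hc).
  rewrite /= big_cons L_up // arith2 /K2 /K1 /=.
  move: (Dd n (psize lam).+1) (Dd n (psize lam)) (Dd n (psize lam).-1).
  move: (fl lam) ((0 < psize lam) : nat) (psize lam) => f e k a b c.
  nia.
Qed.

Definition addk (t : seq (seq nat)) j k :=
  if j < size t then set_nth [::] t j (rcons (nth [::] t j) k) else rcons t [:: k].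

Lemma nth_addk t j k i : j <= size t ->
  nth [::] (addk t j k) i = if i == j then rcons (nth [::] t j) k else nth [::] t i.
Proof.
rewrite /addk => Hj; case: ifP => H; first by rewrite nth_set_nth.
have Ej : j = size t by apply/eqP; rewrite eqn_leq Hj leqNgt H.
rewrite nth_rcons -Ej; case: (ltngtP i j) => [Hi|Hi|E] //.
- by rewrite nth_default // -Ej ltnW.
- by rewrite nth_default // -Ej.
Qed.

Lemma size_addk t j k : j <= size t -> size (addk t j k) = if j < size t then size t else j.+1.
Proof.
rewrite /addk => Hj; case: ifP => H; first by rewrite size_set_nth; apply/maxn_idPr.
have Ej : size t = j by move: H Hj; lia.
by rewrite size_rcons Ej.
Qed.

Lemma addk_cons x t j k : addk (x :: t) j.+1 k = x :: addk t j k.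
Proof. by rewrite /addk /= ltnS; case: ifP. Qed.

Lemma flatten_addk t j k : j <= size t -> perm_eq (flatten (addk t j k)) (rcons (flatten t) k).
Proof.
elim: t j => [|x t IH] [|j] //= Hj.
- rewrite /addk /= cat_rcons rcons_cat perm_cat2l perm_sym.
  by rewrite perm_rcons.
- rewrite addk_cons /= rcons_cat perm_cat2l; exact: IH.
Qed.

Lemma nth_rcons0 (s : seq nat) k p : nth 0 (rcons s k) p = if p == size s then k else nth 0 s p.
Proof.
rewrite nth_rcons; case: (ltnP p (size s)) => H; first by rewrite (ltn_eqF H).
case: eqP => // _; by rewrite nth_default.
Qed.

Lemma rows_size (t : seq (seq nat)) mu : map size t = mu -> forall i, size (nth [::] t i) = nth 0 mu i.
Proof.
move=> <- i; case: (ltnP i (size t)) => H; first by rewrite (nth_map [::]).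
by rewrite !nth_default ?size_map.
Qed.

Lemma iota_rcons p : iota 1 p.+1 = rcons (iota 1 p) p.+1.
Proof. by rewrite -[p.+1]addn1 iotaD /= cats1 add1n addn1. Qed.

Lemma syt_entry mu t : is_syt mu t -> forall i p, p < nth 0 mu i ->
  0 < nth 0 (nth [::] t i) p < (psize mu).+1.
Proof.
case=> Hm [Hp [Hr Hc]] i p Hip.
have Hi : i < size t.
  rewrite ltnNge; apply/negP => H; move: Hip; rewrite -(rows_size Hm) nth_default //.
have Hin : nth 0 (nth [::] t i) p \in flatten t.
  apply/flattenP; exists (nth [::] t i); first exact: mem_nth.
  by apply: mem_nth; rewrite (rows_size Hm).
by move: Hin; rewrite (perm_mem Hp) mem_iota add1n.
Qed.

Lemma syt_mem mu t y r : is_syt mu t -> r \in t -> y \in r -> 0 < y < (psize mu).+1.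
Proof.
case=> Hm [Hp _] Hr Hy.
have Hin : y \in flatten t by apply/flattenP; exists r.
by move: Hin; rewrite (perm_mem Hp) mem_iota add1n.
Qed.

Lemma sorted_rcons_lt (s : seq nat) k : sorted ltn s -> (forall y, y \in s -> y < k) ->
  sorted ltn (rcons s k).
Proof.
case: s => //= x s Hs Hlt; rewrite rcons_path Hs /=; apply: Hlt; exact: mem_last.
Qed.

Lemma rows_sorted (t : seq (seq nat)) : (forall r, r \in t -> sorted ltn r) ->
  forall i, sorted ltn (nth [::] t i).
Proof.
move=> H i; case: (ltnP i (size t)) => Hi; first by apply: H; apply: mem_nth.
by rewrite nth_default.
Qed.

Lemma syt_add mu (j : nat) t : is_part mu -> addable mu j -> is_syt mu t ->
  is_syt (incr_nth mu j) (addk t j (psize mu).+1).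
Proof.
move=> Hm Ha Hs; have Hs' := Hs; case: Hs' => Hsz [Hp [Hr Hc]].
set k := (psize mu).+1.
have Hst : size t = size mu by rewrite -Hsz size_map.
have Hj : j <= size t by rewrite Hst; apply: addable_size.
have Hl : is_part (incr_nth mu j) by rewrite incr_part.
have Hrs := rows_size Hsz.
have Hrow : forall i, size (nth [::] (addk t j k) i) = nth 0 mu i + (i == j).
  move=> i; rewrite nth_addk //; case: eqP => [->|_]; first by rewrite size_rcons Hrs addn1.
  by rewrite Hrs addn0.
have Hent : forall i p, nth 0 (nth [::] (addk t j k) i) p =
    if (i == j) && (p == nth 0 mu j) then k else nth 0 (nth [::] t i) p.
  move=> i p; rewrite nth_addk //; case: eqP => [->|_] //=.
  by rewrite nth_rcons0 Hrs.
split; last split; last split.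
- apply: (eq_from_nth (x0 := 0)).
    by rewrite size_map size_addk // size_incr_nth Hst.
  move=> i Hi; rewrite (nth_map [::]); last by move: Hi; rewrite size_map.
  by rewrite Hrow nth_incr_nth addnC eq_sym.
- rewrite (permPl (flatten_addk k Hj)).
  rewrite psize_incr iota_rcons perm_rcons perm_sym perm_rcons perm_cons perm_sym //.
- move=> r /(nthP [::]) [i Hi <-]; rewrite nth_addk //; case: eqP => _.
  + apply: sorted_rcons_lt; first exact: rows_sorted.
    move=> y Hy; case: (ltnP j (size t)) => Hjt.
    * by case/andP: (syt_mem Hs (mem_nth [::] Hjt) Hy).
    * by move: Hy; rewrite nth_default.
  + exact: rows_sorted.
- move=> i p; rewrite Hrow !Hent => Hp1.
  have Hmono := part_mono Hm i.
  case: (ltnP p (nth 0 mu i.+1)) => Hp2.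
  + rewrite (_ : (i.+1 == j) && (p == nth 0 mu j) = false); last first.
      by case: eqP => // <-; rewrite (ltn_eqF Hp2).
    rewrite (_ : (i == j) && (p == nth 0 mu j) = false); last first.
      case: eqP => // <-; apply/negbTE; rewrite neq_ltn; apply/orP; left; exact: leq_trans Hp2 Hmono.
    apply: Hc; by rewrite Hrs.
  + have Ej : i.+1 = j by move: Hp1 Hp2; case: eqP => //= _; lia.
    have Ep : p = nth 0 mu j by rewrite -Ej; move: Hp1 Hp2; rewrite Ej eqxx /=; lia.
    rewrite Ej Ep !eqxx /= (_ : (i == j) = false); last by rewrite -Ej; lia.
    have Hij : nth 0 mu j < nth 0 mu i by move: Ha; rewrite /addable -Ej /=.
    by case/andP: (syt_entry Hs Hij).
Qed.

Lemma syt_rem mu (j : nat) t : is_part mu -> j <= size t -> size t = size mu ->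
  is_syt (incr_nth mu j) (addk t j (psize mu).+1) -> is_syt mu t.
Proof.
move=> Hm Hj Hst [Hsz [Hp [Hr Hc]]].
set k := (psize mu).+1.
have Hrs := rows_size Hsz.
have Hrow : forall i, size (nth [::] (addk t j k) i) = size (nth [::] t i) + (i == j).
  move=> i; rewrite nth_addk //; case: eqP => [->|_]; first by rewrite size_rcons addn1.
  by rewrite addn0.
have Hts : forall i, size (nth [::] t i) = nth 0 mu i.
  by move=> i; have := Hrs i; rewrite Hrow nth_incr_nth eq_sym; lia.
have Hent : forall i p, p < size (nth [::] t i) ->
    nth 0 (nth [::] (addk t j k) i) p = nth 0 (nth [::] t i) p.
  move=> i p Hip; rewrite nth_addk //; case: eqP => [E|_] //=.
  by rewrite nth_rcons0 -E (ltn_eqF Hip).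
split; last split; last split.
- apply: (eq_from_nth (x0 := 0)); first by rewrite size_map.
  by move=> i Hi; rewrite (nth_map [::]) ?Hts //; move: Hi; rewrite size_map.
- move: Hp; rewrite (permPl (flatten_addk k Hj)) psize_incr iota_rcons.
  by rewrite perm_rcons perm_sym perm_rcons perm_cons perm_sym.
- move=> r /(nthP [::]) [i Hi <-].
  have := rows_sorted Hr i; rewrite nth_addk //; case: eqP => [->|_] // H.
  apply: (subseq_sorted _ (subseq_rcons _ _) H) => x y z; exact: ltn_trans.
- move=> i p Hp1.
  have Hp2 : p < size (nth [::] t i).
    by move: Hp1; rewrite !Hts => H; apply: leq_trans H (part_mono Hm i).
  rewrite -Hent // -(Hent i.+1) //; apply: Hc.
  by rewrite Hrow; apply: leq_trans Hp1 (leq_addr _ _).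
Qed.

Lemma syt_split lam t : is_part lam -> 0 < psize lam -> is_syt lam t ->
  exists j, removable lam j /\
    exists t', is_syt (decr lam j) t' /\ t = addk t' j (psize lam).
Proof.
move=> Hl Hk0 Hs; have Hs' := Hs; case: Hs' => Hsz [Hp [Hr Hc]].
set k := psize lam.
have Hrs := rows_size Hsz.
have Hst : size t = size lam by rewrite -Hsz size_map.
have Hk : k \in flatten t by rewrite (perm_mem Hp) mem_iota; rewrite /k; lia.
case/flattenP: Hk => r Hrt Hkr.
case/(nthP [::]): Hrt => j Hj Er.
set p := index k r.
have Hpr : p < size r by rewrite index_mem.
have Ekp : nth 0 r p = k by rewrite nth_index.
have Hent : forall i q, q < nth 0 lam i -> nth 0 (nth [::] t i) q <= k.
  by move=> i q Hq; case/andP: (syt_entry Hs Hq).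
have Hplast : p.+1 = size r.
  apply/eqP; rewrite eqn_leq Hpr /= leqNgt; apply/negP => H.
  have := Hr r; rewrite -Er mem_nth // => /(_ isT) /(sortedP 0) /(_ p) .
  rewrite Er => /(_ H); rewrite Ekp => Hlt.
  have := Hent j p.+1; rewrite -Hrs Er => /(_ H); lia.
have Hrem : removable lam j.
  rewrite /removable ltnNge; apply/negP => H.
  have Hp1 : p < size (nth [::] t j.+1) by rewrite Hrs; apply: leq_trans H; rewrite -Hrs Er.
  have := Hc j p Hp1; rewrite Er Ekp.
  have := Hent j.+1 p; rewrite -Hrs => /(_ Hp1); lia.
exists j; split=> //.
set mu := decr lam j.
have Hmu : is_part mu by apply: decr_part.
have Elam : incr_nth mu j = lam by apply: incr_decr.
have Hpsz : psize lam = (psize mu).+1 by apply: psize_decr.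
have Hlj : nth 0 lam j = size r by rewrite -Hrs Er.
suff [t' [Hj' [Hs' Et]]] : exists t', j <= size t' /\ size t' = size mu /\ t = addk t' j k.
  exists t'; split=> //; apply: (syt_rem Hmu Hj' Hs').
  by rewrite Elam -Hpsz -Et.
case: (eqVneq (size r) 1) => Hr1.
- have Hjt : j.+1 = size t.
    apply/eqP; rewrite eqn_leq Hj /= leqNgt Hst (part_size Hl).
    by move: Hrem; rewrite /removable Hlj Hr1; lia.
  have Hsz1 : size (take j t) = j by rewrite size_takel // ltnW.
  exists (take j t); split; first by rewrite Hsz1.
  split.
  + rewrite Hsz1; symmetry; apply: size_eq_of => // i.
    rewrite /mu nth_decr //.
    case: (ltngtP i j) => [Hi|Hi|->].
    * by rewrite subn0 -(part_size Hl) -Hst -Hjt ltnS ltnW.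
    * rewrite subn0 -(part_size Hl) -Hst -Hjt; symmetry; apply/negbTE.
      by rewrite -leqNgt.
    * by rewrite Hlj Hr1.
  + rewrite /addk Hsz1 ltnn.
    have Er' : r = [:: k].
      by case: r Er Hkr Hr1 {Hpr Ekp Hplast Hlj p} => [|x [|y r]] //= _; rewrite inE => /eqP ->.
    by rewrite -Er' -Er -take_nth // Hjt take_size.
- have Hsz' : size (set_nth [::] t j (take p r)) = size t.
    by rewrite size_set_nth; apply/maxn_idPr.
  exists (set_nth [::] t j (take p r)); rewrite Hsz'; split; first exact: ltnW.
  split.
  + rewrite Hst; symmetry; apply: size_eq_of => // i.
    rewrite /mu nth_decr // (part_size Hl).
    case: (eqVneq j i) => [<-|E] /=; last by rewrite subn0.
    rewrite Hlj; move: Hr1 Hpr; lia.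
  + rewrite /addk Hsz' Hj nth_set_nth /= eqxx -Ekp -take_nth // Hplast take_size.
    rewrite set_set_nth eqxx; apply: (eq_from_nth (x0 := [::])).
      by rewrite size_set_nth; symmetry; apply/maxn_idPr.
    by move=> i Hi; rewrite nth_set_nth /=; case: eqP => // ->.
Qed.

Lemma syt_nil t : is_syt [::] t <-> t = [::].
Proof.
split.
- by case=> Hsz _; case: t Hsz.
- move=> ->; split=> //; split=> //; split=> //.
Qed.

Lemma syt_card_aux n : forall lam, psize lam < n -> is_part lam -> has_card (is_syt lam) (fl lam).
Proof.
elim: n => [//|n IH] lam Hn Hl.
case: (eqVneq lam [::]) => [->|Hne].
- exists [:: [::]]; split=> //; split=> // t.
  by rewrite inE syt_nil; split => [/eqP|->].
have Hk0 : 0 < psize lam by rewrite lt0n -part_nil_psize.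
rewrite fl_rec // /downs big_map.
apply: (@hc_union _ _ _ (fun j t => exists t', is_syt (decr lam j) t' /\ t = addk t' j (psize lam))).
- by rewrite filter_uniq // iota_uniq.
- move=> j; rewrite mem_filter => /andP [Hr _].
  have Hd := decr_part Hl Hr; have Hp := psize_decr Hl Hr.
  apply: hc_image; first by apply: IH => //; move: Hn; rewrite Hp.
  move=> t1 t2 H1 H2 E.
  have Hs1 : size t1 = size (decr lam j) by case: H1 => <- _; rewrite size_map.
  have Hs2 : size t2 = size (decr lam j) by case: H2 => <- _; rewrite size_map.
  have Ha : addable (decr lam j) j by rewrite -incr_part // incr_decr.
  have Hj : j <= size (decr lam j) by apply: addable_size.
  apply: (eq_from_nth (x0 := [::])); first by rewrite Hs1 Hs2.
  move=> i _; have := congr1 (fun s => nth [::] s i) E.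
  rewrite !nth_addk ?Hs1 ?Hs2 //; case: eqP => [->|_] //.
  by move/rcons_inj => [].
- move=> j1 j2 t; rewrite !mem_filter => /andP [Hr1 _] /andP [Hr2 _].
  move=> [t1 [H1 ->]] [t2 [H2 E]].
  apply/eqP; apply/negP => /negP Hne12.
  have Hs1 : size t1 = size (decr lam j1) by case: H1 => <- _; rewrite size_map.
  have Hs2 : size t2 = size (decr lam j2) by case: H2 => <- _; rewrite size_map.
  have Hd1 := decr_part Hl Hr1; have Hd2 := decr_part Hl Hr2.
  have Hj1 : j1 <= size t1.
    by rewrite Hs1; apply: addable_size => //; rewrite -incr_part // incr_decr.
  have Hj2 : j2 <= size t2.
    by rewrite Hs2; apply: addable_size => //; rewrite -incr_part // incr_decr.
  have := congr1 (fun s => nth [::] s j2) E.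
  rewrite !nth_addk // eqxx eq_sym (negbTE Hne12) => Erow.
  have Hin : psize lam \in nth [::] t1 j2 by rewrite Erow mem_rcons mem_head.
  have Hj2t : j2 < size t1.
    by rewrite ltnNge; apply/negP => H; move: Hin; rewrite nth_default.
  have := syt_mem H1 (mem_nth [::] Hj2t) Hin; rewrite -psize_decr //; lia.
- move=> t; split.
  + move=> Hs; have [j [Hr [t' [Ht' Et]]]] := syt_split Hl Hk0 Hs.
    exists j; split; last by exists t'.
    by rewrite mem_filter Hr mem_iota add0n removable_size.
  + case=> j [Hj [t' [Ht' ->]]]; move: Hj; rewrite mem_filter => /andP [Hr _].
    have Hd := decr_part Hl Hr.
    have Ha : addable (decr lam j) j by rewrite -incr_part // incr_decr.
    have := syt_add Hd Ha Ht'; rewrite incr_decr // -psize_decr //.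
Qed.

Lemma syt_card lam : is_part lam -> has_card (is_syt lam) (fl lam).
Proof. exact: (@syt_card_aux (psize lam).+1). Qed.


Unset Implicit Arguments.

Theorem mainTheorem11 (n : nat) (lam : seq nat) :
  is_part lam ->
  let k := psize lam in
  exists f : nat,
    has_card (is_syt lam) f /\
    has_card (T_walk n [::] lam) ((n.+1)`! * 'C(n, k) * f) /\
    has_card (T_walk n lam [::]) ((n.+1)`! %/ (k.+1)`! * 'C(n, k) * f).
Proof.
move=> Hl k; exists (fl lam); split; first exact: syt_card.
split.
- apply: (hc_ext (P := Wk 0 (3 * n) [::] lam)); first by move=> w; rewrite T_Wk.
  exact: formula1.
- apply: (hc_ext (P := Wk 0 (3 * n) lam [::])); first by move=> w; rewrite T_Wk.
  exact: formula2.
Qed.
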